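(* Let $f_3:\mathbb{T}\times\mathbb{R}\to\mathbb{T}\times\mathbb{R}$ be the map $(\psi,w)\mapsto(\psi_1,w_1)$ with $\psi_1=\psi+w$, $w_1=w+2\pi(\cos\psi_1-1)-3\sin\psi_1$ (the case $\mu=3$, third order resonance). Then $f_3^3=(\psi_3,w_3)$ satisfies $$\psi_3=\psi-\pi(3\psi^2+2\psi w)+O_3(\psi,w),\qquad w_3=w+\pi(6\psi^2+6\psi w+w^2)+O_3(\psi,w),$$ the function $G(w_3,\psi)$ defined by $w_3=w+\partial_\psi G(w_3,\psi)$, $\psi_3=\psi-\partial_{w_3}G(w_3,\psi)$, $G=O_3$, is $$G(w_3,\psi)=\pi\,\psi(\psi+w_3)(2\psi+w_3)+O_4(\psi,w_3),$$ which has no strict extremum at the origin, and the fixed point $(0,0)$ is locally unstable under $f_3$.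
   Context: $\mathbb{T}=\mathbb{R}/2\pi\mathbb{Z}$; $O_k(\psi,w)$ denotes terms of total order at least $k$ in $(\psi,w)$. A fixed point $p_{\rm s}$ is locally stable if for every $\epsilon>0$ there exists $\delta>0$ such that $\|p-p_{\rm s}\|<\delta$ implies $\|f^n(p)-p_{\rm s}\|<\epsilon$ for all $n\in\mathbb{Z}$; otherwise it is locally unstable. *)

(* Defs.v *)
From Stdlib Require Import Reals Lra ZArith.
Open Scope R_scope.

(* The map f_3 on the lift R x R of T x R (psi is the angle, taken mod 2*PI). *)
Definition f3 (p : R * R) : R * R :=
  let psi1 := fst p + snd p in
  (psi1, snd p + 2 * PI * (cos psi1 - 1) - 3 * sin psi1).

Definition f3inv (p : R * R) : R * R :=
  let w := snd p - 2 * PI * (cos (fst p) - 1) + 3 * sin (fst p) in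
  (fst p - w, w).

Definition zorbit (f finv : R * R -> R * R) (n : Z) (p : R * R) : R * R :=
  match n with
  | Z0 => p
  | Zpos k => Nat.iter (Pos.to_nat k) f p
  | Zneg k => Nat.iter (Pos.to_nat k) finv p
  end.

Definition T_near (x a eps : R) : Prop :=
  exists k : Z, Rabs (x - a - 2 * PI * IZR k) < eps.

Definition locally_stable (f finv : R * R -> R * R) (ps : R * R) : Prop :=
  forall eps, 0 < eps -> exists delta, 0 < delta /\
    forall p : R * R,
      T_near (fst p) (fst ps) delta -> Rabs (snd p - snd ps) < delta ->
      forall n : Z,
        T_near (fst (zorbit f finv n p)) (fst ps) eps /\
        Rabs (snd (zorbit f finv n p) - snd ps) < eps.

Definition bigO (k : nat) (h : R -> R -> R) : Prop :=
  exists C r, 0 < r /\ forall x y, Rabs x < r -> Rabs y < r ->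
    Rabs (h x y) <= C * (Rabs x + Rabs y) ^ k.

Definition strict_local_min0 (G : R -> R -> R) : Prop :=
  exists r, 0 < r /\ forall x y, Rabs x < r -> Rabs y < r ->
    (x, y) <> (0, 0) -> G 0 0 < G x y.

Definition strict_local_max0 (G : R -> R -> R) : Prop :=
  exists r, 0 < r /\ forall x y, Rabs x < r -> Rabs y < r ->
    (x, y) <> (0, 0) -> G x y < G 0 0.

(* Main.v *)
Require Import Defs.
From Stdlib Require Import Reals Lra Lia ZArith ClassicalEpsilon Classical_Prop.
Open Scope R_scope.

Definition sN (x y : R) := Rabs x + Rabs y.

Definition Ok (k : nat) (f : R -> R -> R) : Prop :=
  exists C, 0 <= C /\ forall x y, sN x y <= 1 -> Rabs (f x y) <= C * sN x y ^ k.

Lemma sN_ge0 x y : 0 <= sN x y.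
Proof. unfold sN; pose proof (Rabs_pos x); pose proof (Rabs_pos y); lra. Qed.

Lemma pow_le1_mono (s : R) (j k : nat) : 0 <= s -> s <= 1 -> (j <= k)%nat -> s ^ k <= s ^ j.
Proof.
  intros H0 H1 Hjk. induction Hjk. lra.
  simpl. apply Rle_trans with (1 * s ^ m). 2: lra.
  apply Rmult_le_compat_r. apply pow_le; auto. auto.
Qed.

Lemma Ok_ext k f g : (forall x y, f x y = g x y) -> Ok k f -> Ok k g.
Proof. intros E [C [HC H]]. exists C; split; auto. intros x y Hs. rewrite <- E. auto. Qed.

Lemma Ok_weak k k' f : Ok k' f -> (k <= k')%nat -> Ok k f.
Proof.
  intros [C [HC H]] Hk. exists C; split; auto. intros x y Hs.
  eapply Rle_trans. apply H; auto. apply Rmult_le_compat_l; auto.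
  apply pow_le1_mono; auto. apply sN_ge0.
Qed.

Lemma Ok_add k f g : Ok k f -> Ok k g -> Ok k (fun x y => f x y + g x y).
Proof.
  intros [C1 [H1 F1]] [C2 [H2 F2]]. exists (C1 + C2); split. lra.
  intros x y Hs. eapply Rle_trans. apply Rabs_triang.
  specialize (F1 x y Hs); specialize (F2 x y Hs). lra.
Qed.

Lemma Ok_opp k f : Ok k f -> Ok k (fun x y => - f x y).
Proof. intros [C [H F]]. exists C; split; auto. intros x y Hs. rewrite Rabs_Ropp; auto. Qed.

Lemma Ok_sub k f g : Ok k f -> Ok k g -> Ok k (fun x y => f x y - g x y).
Proof.
  intros H1 H2. apply (Ok_ext k (fun x y => f x y + - g x y)).
  intros; ring. apply Ok_add; auto. apply Ok_opp; auto.
Qed.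

Lemma Ok_mul i j f g : Ok i f -> Ok j g -> Ok (i + j) (fun x y => f x y * g x y).
Proof.
  intros [C1 [H1 F1]] [C2 [H2 F2]]. exists (C1 * C2); split. apply Rmult_le_pos; auto.
  intros x y Hs. rewrite Rabs_mult, pow_add.
  replace (C1 * C2 * (sN x y ^ i * sN x y ^ j)) with ((C1 * sN x y ^ i) * (C2 * sN x y ^ j)) by ring.
  apply Rmult_le_compat; try apply Rabs_pos; auto.
Qed.

Lemma Ok_const c : Ok 0 (fun _ _ => c).
Proof. exists (Rabs c); split. apply Rabs_pos. intros; simpl; lra. Qed.

Lemma Ok_x : Ok 1 (fun x y => x).
Proof. exists 1; split. lra. intros x y Hs. unfold sN in *. simpl. pose proof (Rabs_pos y). lra. Qed.

Lemma Ok_y : Ok 1 (fun x y => y).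
Proof. exists 1; split. lra. intros x y Hs. unfold sN in *. simpl. pose proof (Rabs_pos x). lra. Qed.

Lemma Ok_pow k n f : Ok k f -> Ok (k * n) (fun x y => f x y ^ n).
Proof.
  intros H. induction n.
  - rewrite Nat.mul_0_r. apply (Ok_ext 0 (fun _ _ => 1)). intros; simpl; auto. apply Ok_const.
  - replace (k * S n)%nat with (k + k * n)%nat by lia. apply Ok_mul; auto.
Qed.

Lemma Ok_div_const k f c : Ok k f -> Ok k (fun x y => f x y / c).
Proof.
  intros H. apply (Ok_ext k (fun x y => f x y * / c)).
  intros; unfold Rdiv; auto. rewrite <- (Nat.add_0_r k). apply Ok_mul; auto. apply Ok_const.
Qed.

Lemma Ok_comp (g : R -> R) K m f :
  0 <= K -> (forall t, Rabs (g t) <= K * Rabs t ^ m) -> Ok 1 f ->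
  Ok m (fun x y => g (f x y)).
Proof.
  intros HK Hg [C [HC F]]. exists (K * C ^ m); split.
  apply Rmult_le_pos; auto. apply pow_le; auto.
  intros x y Hs. eapply Rle_trans. apply Hg.
  rewrite Rmult_assoc. apply Rmult_le_compat_l; auto.
  rewrite <- Rpow_mult_distr. apply pow_incr. split. apply Rabs_pos.
  specialize (F x y Hs). simpl in F. lra.
Qed.

Lemma Ok_le_bound k f : Ok k f -> exists C, 0 <= C /\ forall x y, sN x y <= 1 -> Rabs (f x y) <= C * sN x y ^ k.
Proof. auto. Qed.

Ltac Osolve :=
  match goal with
  | |- Ok ?k Rmult => change (Ok k (fun x y => x * y)); Osolve
  | |- Ok ?k Rplus => change (Ok k (fun x y => x + y)); Osolve
  | |- Ok ?k Rminus => change (Ok k (fun x y => x - y)); Osolve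
  | |- Ok ?k ?f => first
      [ assumption
      | eapply Ok_weak; [eassumption | lia]
      | apply Ok_const
      | eapply Ok_weak; [apply Ok_x | lia]
      | eapply Ok_weak; [apply Ok_y | lia]
      | apply Ok_add; Osolve
      | apply Ok_sub; Osolve
      | apply Ok_opp; Osolve
      | apply Ok_div_const; Osolve
      | Osolve_mul k
      | Osolve_pow k ]
  end
with Osolve_mul k :=
  lazymatch goal with
  | |- Ok _ (fun x y => @?f x y * @?g x y) =>
    first [ apply (Ok_weak k (0 + k)); [apply Ok_mul; Osolve | lia]
          | apply (Ok_weak k (1 + (k-1))); [apply Ok_mul; Osolve | lia]
          | apply (Ok_weak k (2 + (k-2))); [apply Ok_mul; Osolve | lia]
          | apply (Ok_weak k (3 + (k-3))); [apply Ok_mul; Osolve | lia]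
          | apply (Ok_weak k (4 + (k-4))); [apply Ok_mul; Osolve | lia] ]
  end
with Osolve_pow k :=
  lazymatch goal with
  | |- Ok _ (fun x y => @?f x y ^ ?n) =>
    first [ apply (Ok_weak k (1 * n)); [apply Ok_pow; Osolve | simpl; lia]
          | apply (Ok_weak k (2 * n)); [apply Ok_pow; Osolve | simpl; lia] ]
  end.




Lemma Rabs_le_inv a b : Rabs a <= b -> - b <= a <= b.
Proof. unfold Rabs; destruct (Rcase_abs a); lra. Qed.

Lemma PI_bnd : 2 < PI <= 4.
Proof. pose proof PI2_1; pose proof PI_4; lra. Qed.

Lemma sin_tay t : 0 <= t <= 1 -> t - t^3/6 <= sin t <= t - t^3/6 + t^5/120.
Proof.
  intros [H0 H1]. pose proof PI2_1. destruct (sin_bound t 0 H0) as [A B]. lra.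
  unfold sin_approx, sin_term in A, B. simpl in A, B.
  unfold Factorial.fact in A, B. simpl in A, B. split; [lra|].
  eapply Rle_trans. apply B. right. field.
Qed.

Lemma cos_tay t : -1 <= t <= 1 -> 1 - t^2/2 <= cos t <= 1 - t^2/2 + t^4/24.
Proof.
  intros [H0 H1]. pose proof PI2_1. destruct (cos_bound t 0) as [A B]. lra. lra.
  unfold cos_approx, cos_term in A, B. simpl in A, B.
  unfold Factorial.fact in A, B. simpl in A, B. split.
  eapply Rle_trans. 2: apply A. right. field.
  eapply Rle_trans. apply B. right. field.
Qed.

Lemma sin_tay_abs t : Rabs t <= 1 -> Rabs (sin t - t + t^3/6) <= Rabs t ^ 5 / 120.
Proof.
  intros H. destruct (Rle_dec 0 t) as [Hp|Hn].
  - rewrite (Rabs_right t) in H |- * by lra. destruct (sin_tay t) as [A B]; [lra|].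
    pose proof (pow_le t 5 Hp).
    rewrite Rabs_right; lra.
  - rewrite (Rabs_left t) in H |- * by lra. destruct (sin_tay (-t)) as [A B]; [lra|].
    rewrite sin_neg in A, B.
    replace ((-t)^3) with (-(t^3)) in A, B by ring.
    replace ((-t)^5) with (-(t^5)) in A, B by ring.
    rewrite Rabs_left1; [ | lra]. replace ((-t)^5) with (-(t^5)) by ring. lra.
Qed.

Lemma cos_tay_abs t : Rabs t <= 1 -> Rabs (cos t - 1 + t^2/2) <= t ^ 4 / 24.
Proof.
  intros H. apply Rabs_le_inv in H. destruct (cos_tay t) as [A B]; [lra|].
  pose proof (pow_le (t^2) 2). rewrite Rabs_right; [|lra].
  replace (t^4) with ((t^2)^2) by ring. replace (t^4) with ((t^2)^2) in B by ring. lra.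
Qed.

Lemma Rabs_pow_le1 t n m : Rabs t <= 1 -> (m <= n)%nat -> Rabs t ^ n <= Rabs t ^ m.
Proof. intros H Hmn. apply pow_le1_mono; auto. apply Rabs_pos. Qed.

Definition ev (t : R) := 2 * PI * (cos t - 1 + t^2/2) - 3 * (sin t - t).
Definition eV (t : R) := 2 * PI * (sin t - t + t^3/6) + 3 * (cos t - 1 + t^2/2).
Definition eu (t : R) := 3 * (1 - cos t) - 2 * PI * sin t.

Lemma sin_abs_le1 t : Rabs (sin t) <= 1.
Proof. pose proof (SIN_bound t). apply Rabs_le; lra. Qed.
Lemma cos_abs_le1 t : Rabs (cos t) <= 1.
Proof. pose proof (COS_bound t). apply Rabs_le; lra. Qed.

Ltac rabs_sum := repeat (eapply Rle_trans; [apply Rabs_triang|]);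
  repeat rewrite Rabs_mult; repeat rewrite Rabs_Ropp.

Lemma Rabs_lin2 a b X Y : 0 <= a -> 0 <= b -> Rabs (a * X - b * Y) <= a * Rabs X + b * Rabs Y.
Proof.
  intros. unfold Rminus. eapply Rle_trans. apply Rabs_triang. rewrite Rabs_Ropp, !Rabs_mult.
  rewrite (Rabs_right a), (Rabs_right b) by lra. lra.
Qed.

Lemma ev_bound t : Rabs (ev t) <= 30 * Rabs t ^ 3.
Proof.
  pose proof PI_bnd. unfold ev. pose proof (Rabs_pos t) as Ht0.
  assert (E2 : Rabs (2 * PI) = 2 * PI) by (apply Rabs_right; lra).
  assert (E3 : Rabs 3 = 3) by (apply Rabs_right; lra).
  eapply Rle_trans. apply Rabs_lin2; lra.
  destruct (Rle_dec (Rabs t) 1) as [H1|H1].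
  - pose proof (cos_tay_abs t H1). pose proof (sin_tay_abs t H1).
    assert (Rabs (sin t - t) <= Rabs t ^ 3 / 6 + Rabs t ^ 5 / 120).
    { replace (sin t - t) with ((sin t - t + t^3/6) + - (t^3/6)) by ring.
      eapply Rle_trans. apply Rabs_triang. rewrite Rabs_Ropp.
      unfold Rdiv. rewrite Rabs_mult, <- RPow_abs, (Rabs_right (/6)) by lra. lra. }
    assert (t^4 = Rabs t ^ 4) by (rewrite RPow_abs; rewrite Rabs_right; [auto| apply Rle_ge; replace (t^4) with ((t^2)^2) by ring; apply pow_le; apply pow2_ge_0]).
    pose proof (Rabs_pow_le1 t 4 3 H1 ltac:(lia)).
    pose proof (Rabs_pow_le1 t 5 3 H1 ltac:(lia)).
    pose proof (pow_le (Rabs t) 3 Ht0).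
    assert (2 * PI * Rabs (cos t - 1 + t ^ 2 / 2) <= 8 * Rabs (cos t - 1 + t ^ 2 / 2)).
    { pose proof (Rabs_pos (cos t - 1 + t ^ 2 / 2)). nra. }
    lra.
  - assert (Rabs (cos t - 1 + t^2/2) <= 2 + Rabs t ^ 2 / 2).
    { eapply Rle_trans. apply Rabs_triang. pose proof (cos_abs_le1 t).
      unfold Rminus. eapply Rle_trans. apply Rplus_le_compat_r. apply Rabs_triang.
      rewrite Rabs_Ropp, Rabs_R1. unfold Rdiv. rewrite Rabs_mult, <- RPow_abs, (Rabs_right (/2)) by lra. lra. }
    assert (Rabs (sin t - t) <= 1 + Rabs t).
    { unfold Rminus. eapply Rle_trans. apply Rabs_triang. rewrite Rabs_Ropp. pose proof (sin_abs_le1 t). lra. }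
    assert (1 <= Rabs t) by lra.
    assert (Rabs t ^ 2 <= Rabs t ^ 3) by (simpl; nra).
    assert (1 <= Rabs t ^ 2) by (simpl; nra).
    assert (2 * PI * Rabs (cos t - 1 + t ^ 2 / 2) <= 8 * Rabs (cos t - 1 + t ^ 2 / 2)).
    { pose proof (Rabs_pos (cos t - 1 + t ^ 2 / 2)). nra. }
    assert (Rabs t <= Rabs t ^ 2) by (simpl; nra). lra.
Qed.

Lemma Rabs_lin2p a b X Y : 0 <= a -> 0 <= b -> Rabs (a * X + b * Y) <= a * Rabs X + b * Rabs Y.
Proof.
  intros. eapply Rle_trans. apply Rabs_triang. rewrite !Rabs_mult.
  rewrite (Rabs_right a), (Rabs_right b) by lra. lra.
Qed.

Lemma eV_bound t : Rabs (eV t) <= 30 * Rabs t ^ 4.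
Proof.
  pose proof PI_bnd. unfold eV. pose proof (Rabs_pos t) as Ht0.
  eapply Rle_trans. apply Rabs_lin2p; lra.
  assert (2 * PI * Rabs (sin t - t + t ^ 3 / 6) <= 8 * Rabs (sin t - t + t ^ 3 / 6)).
  { pose proof (Rabs_pos (sin t - t + t ^ 3 / 6)). nra. }
  destruct (Rle_dec (Rabs t) 1) as [H1|H1].
  - pose proof (cos_tay_abs t H1). pose proof (sin_tay_abs t H1).
    assert (t^4 = Rabs t ^ 4) by (rewrite RPow_abs; rewrite Rabs_right; [auto| apply Rle_ge; replace (t^4) with ((t^2)^2) by ring; apply pow_le; apply pow2_ge_0]).
    pose proof (Rabs_pow_le1 t 5 4 H1 ltac:(lia)).
    pose proof (pow_le (Rabs t) 4 Ht0). lra.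
  - assert (Rabs (cos t - 1 + t^2/2) <= 2 + Rabs t ^ 2 / 2).
    { eapply Rle_trans. apply Rabs_triang. pose proof (cos_abs_le1 t).
      unfold Rminus. eapply Rle_trans. apply Rplus_le_compat_r. apply Rabs_triang.
      rewrite Rabs_Ropp, Rabs_R1. unfold Rdiv. rewrite Rabs_mult, <- RPow_abs, (Rabs_right (/2)) by lra. lra. }
    assert (Rabs (sin t - t + t^3/6) <= 1 + Rabs t + Rabs t ^ 3 / 6).
    { unfold Rminus. eapply Rle_trans. apply Rabs_triang. eapply Rle_trans. apply Rplus_le_compat_r. apply Rabs_triang.
      rewrite Rabs_Ropp. pose proof (sin_abs_le1 t).
      unfold Rdiv. rewrite Rabs_mult, <- RPow_abs, (Rabs_right (/6)) by lra. lra. }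
    assert (1 <= Rabs t) by lra.
    assert (Rabs t <= Rabs t ^ 2) by (simpl; nra).
    assert (Rabs t ^ 2 <= Rabs t ^ 3) by (simpl; nra).
    assert (Rabs t ^ 3 <= Rabs t ^ 4) by (simpl; nra).
    lra.
Qed.

Lemma eu_bound t : Rabs (eu t) <= 20 * Rabs t.
Proof.
  pose proof PI_bnd. unfold eu. pose proof (Rabs_pos t) as Ht0.
  eapply Rle_trans. apply Rabs_lin2; lra.
  assert (2 * PI * Rabs (sin t) <= 8 * Rabs (sin t)).
  { pose proof (Rabs_pos (sin t)). nra. }
  destruct (Rle_dec (Rabs t) 1) as [H1|H1].
  - pose proof (sin_tay_abs t H1).
    assert (Rabs (sin t) <= 2 * Rabs t).
    { replace (sin t) with ((sin t - t + t^3/6) + (t - t^3/6)) by ring.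
      eapply Rle_trans. apply Rabs_triang.
      assert (Rabs (t - t^3/6) <= Rabs t + Rabs t ^ 3 / 6).
      { unfold Rminus. eapply Rle_trans. apply Rabs_triang. rewrite Rabs_Ropp.
        unfold Rdiv. rewrite Rabs_mult, <- RPow_abs, (Rabs_right (/6)) by lra. lra. }
      pose proof (Rabs_pow_le1 t 5 1 H1 ltac:(lia)).
      pose proof (Rabs_pow_le1 t 3 1 H1 ltac:(lia)). simpl in *. lra. }
    apply Rabs_le_inv in H1 as H1'. destruct (cos_tay t H1').
    assert (t^2 <= Rabs t).
    { replace (t^2) with (Rabs t * Rabs t). nra. rewrite <- Rabs_mult. simpl. rewrite Rmult_1_r.
      apply Rabs_right. apply Rle_ge, Rle_0_sqr. }
    pose proof (COS_bound t). rewrite (Rabs_right (1 - cos t)) by lra. lra.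
  - assert (Rabs (1 - cos t) <= 2).
    { unfold Rminus. eapply Rle_trans. apply Rabs_triang. rewrite Rabs_Ropp, Rabs_R1.
      pose proof (cos_abs_le1 t). lra. }
    pose proof (sin_abs_le1 t). lra.
Qed.

Lemma Ok_ev f : Ok 1 f -> Ok 3 (fun x y => ev (f x y)).
Proof. intros H. apply (Ok_comp ev 30 3 f); [lra | apply ev_bound | auto]. Qed.
Lemma Ok_eV f : Ok 1 f -> Ok 4 (fun x y => eV (f x y)).
Proof. intros H. apply (Ok_comp eV 30 4 f); [lra | apply eV_bound | auto]. Qed.
Lemma Ok_eu f : Ok 1 f -> Ok 1 (fun x y => eu (f x y)).
Proof. intros H. apply (Ok_comp eu 20 1 f); [lra | | auto]. intros t. simpl. rewrite Rmult_1_r. apply eu_bound. Qed.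

Definition v (t : R) := 2 * PI * (cos t - 1) - 3 * sin t.
Definition Vf (t : R) := 2 * PI * (sin t - t) + 3 * (cos t - 1).
Definition dv (t : R) := - 2 * PI * sin t - 3 * cos t.

Lemma v_ev t : v t = - 3 * t - PI * t ^ 2 + ev t.
Proof. unfold v, ev. field. Qed.
Lemma Vf_eV t : Vf t = - 3 / 2 * t ^ 2 - PI / 3 * t ^ 3 + eV t.
Proof. unfold Vf, eV. field. Qed.
Lemma dv_eu t : dv t = - 3 + eu t.
Proof. unfold dv, eu. ring. Qed.

Definition p1 (x y : R) := x + y.
Definition w1 (x y : R) := y + v (p1 x y).
Definition p2 (x y : R) := p1 x y + w1 x y.
Definition w2 (x y : R) := w1 x y + v (p2 x y).
Definition p3 (x y : R) := p2 x y + w2 x y.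
Definition w3 (x y : R) := w2 x y + v (p3 x y).

Definition Jw1 (x y : R) := - 3 * x - 2 * y - PI * (x + y) ^ 2.
Definition Jp2 (x y : R) := - 2 * x - y - PI * (x + y) ^ 2.
Definition Jw2 (x y : R) := 3 * x + y + 2 * PI * (x + y) ^ 2 - PI * (2 * x + y) ^ 2.
Definition Jp3 (x y : R) := x - PI * (3 * x ^ 2 + 2 * x * y).
Definition Jw3 (x y : R) := y + PI * (6 * x ^ 2 + 6 * x * y + y ^ 2).

Lemma Ok_p1 : Ok 1 p1.
Proof. unfold p1. Osolve. Qed.

Lemma Ok_Dw1 : Ok 3 (fun x y => w1 x y - Jw1 x y).
Proof.
  apply (Ok_ext 3 (fun x y => ev (p1 x y))).
  - intros x y. unfold w1, Jw1. rewrite v_ev. unfold p1. ring.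
  - apply Ok_ev, Ok_p1.
Qed.

Lemma Ok_w1 : Ok 1 w1.
Proof.
  pose proof Ok_Dw1.
  apply (Ok_ext 1 (fun x y => (w1 x y - Jw1 x y) + (- 3 * x - 2 * y - PI * (x + y) ^ 2))).
  intros; unfold Jw1; ring. Osolve.
Qed.

Lemma Ok_Dp2 : Ok 3 (fun x y => p2 x y - Jp2 x y).
Proof.
  pose proof Ok_Dw1.
  apply (Ok_ext 3 (fun x y => w1 x y - Jw1 x y)).
  intros; unfold p2, Jp2, Jw1, p1; ring. auto.
Qed.

Lemma Ok_p2 : Ok 1 p2.
Proof.
  pose proof Ok_Dp2.
  apply (Ok_ext 1 (fun x y => (p2 x y - Jp2 x y) + (- 2 * x - y - PI * (x + y) ^ 2))).
  intros; unfold Jp2; ring. Osolve.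
Qed.

Lemma Ok_Qp2 : Ok 2 (fun x y => p2 x y - (- 2 * x - y)).
Proof.
  pose proof Ok_Dp2.
  apply (Ok_ext 2 (fun x y => (p2 x y - Jp2 x y) + (- PI * (x + y) ^ 2))).
  intros; unfold Jp2; ring. Osolve.
Qed.

Lemma Ok_Dw2 : Ok 3 (fun x y => w2 x y - Jw2 x y).
Proof.
  pose proof Ok_Dw1. pose proof Ok_Dp2. pose proof Ok_p2. pose proof Ok_Qp2.
  pose proof (Ok_ev _ Ok_p2).
  apply (Ok_ext 3 (fun x y => (w1 x y - Jw1 x y) - 3 * (p2 x y - Jp2 x y)
      - PI * ((p2 x y - (- 2 * x - y)) * (p2 x y + (- 2 * x - y))) + ev (p2 x y))).
  - intros x y. unfold w2. rewrite (v_ev (p2 x y)). unfold Jw2, Jw1, Jp2. ring.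
  - Osolve.
Qed.

Lemma Ok_w2 : Ok 1 w2.
Proof.
  pose proof Ok_Dw2.
  apply (Ok_ext 1 (fun x y => (w2 x y - Jw2 x y) + (3 * x + y + 2 * PI * (x + y) ^ 2 - PI * (2 * x + y) ^ 2))).
  intros; unfold Jw2; ring. Osolve.
Qed.

Lemma Ok_Dp3 : Ok 3 (fun x y => p3 x y - Jp3 x y).
Proof.
  pose proof Ok_Dw2. pose proof Ok_Dp2.
  apply (Ok_ext 3 (fun x y => (p2 x y - Jp2 x y) + (w2 x y - Jw2 x y))).
  intros; unfold p3, Jp3, Jp2, Jw2; ring. Osolve.
Qed.

Lemma Ok_p3 : Ok 1 p3.
Proof.
  pose proof Ok_Dp3.
  apply (Ok_ext 1 (fun x y => (p3 x y - Jp3 x y) + (x - PI * (3 * x ^ 2 + 2 * x * y)))).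
  intros; unfold Jp3; ring. Osolve.
Qed.

Lemma Ok_Qp3 : Ok 2 (fun x y => p3 x y - x).
Proof.
  pose proof Ok_Dp3.
  apply (Ok_ext 2 (fun x y => (p3 x y - Jp3 x y) + (- PI * (3 * x ^ 2 + 2 * x * y)))).
  intros; unfold Jp3; ring. Osolve.
Qed.

Lemma Ok_Dw3 : Ok 3 (fun x y => w3 x y - Jw3 x y).
Proof.
  pose proof Ok_Dw2. pose proof Ok_Dp3. pose proof Ok_p3. pose proof Ok_Qp3.
  pose proof (Ok_ev _ Ok_p3).
  apply (Ok_ext 3 (fun x y => (w2 x y - Jw2 x y) - 3 * (p3 x y - Jp3 x y)
      - PI * ((p3 x y - x) * (p3 x y + x)) + ev (p3 x y))).
  - intros x y. unfold w3. rewrite (v_ev (p3 x y)). unfold Jw2, Jp3, Jw3. ring.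
  - Osolve.
Qed.

Lemma Ok_w3 : Ok 1 w3.
Proof.
  pose proof Ok_Dw3.
  apply (Ok_ext 1 (fun x y => (w3 x y - Jw3 x y) + (y + PI * (6 * x ^ 2 + 6 * x * y + y ^ 2)))).
  intros; unfold Jw3; ring. Osolve.
Qed.

Lemma Ok_Qw3 : Ok 2 (fun x y => w3 x y - y).
Proof.
  pose proof Ok_Dw3.
  apply (Ok_ext 2 (fun x y => (w3 x y - Jw3 x y) + (PI * (6 * x ^ 2 + 6 * x * y + y ^ 2)))).
  intros; unfold Jw3; ring. Osolve.
Qed.

Definition Phi (x y : R) := (x - p3 x y) * w3 x y + (y ^ 2 / 2 + Vf (p1 x y))
  + (w1 x y ^ 2 / 2 + Vf (p2 x y)) + (w2 x y ^ 2 / 2 + Vf (p3 x y)).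

Definition Tc (x W : R) := PI * x * (x + W) * (2 * x + W).

Lemma Ok_Jw1 : Ok 1 Jw1. Proof. unfold Jw1. Osolve. Qed.
Lemma Ok_Jw2 : Ok 1 Jw2. Proof. unfold Jw2. Osolve. Qed.
Lemma Ok_Jp2 : Ok 1 Jp2. Proof. unfold Jp2. Osolve. Qed.
Lemma Ok_Jp3 : Ok 1 Jp3. Proof. unfold Jp3. Osolve. Qed.

Lemma Ok_Phi : Ok 4 (fun x y => Phi x y - Tc x (w3 x y)).
Proof.
  pose proof Ok_Dw1. pose proof Ok_Dp2. pose proof Ok_Dw2. pose proof Ok_Dp3. pose proof Ok_Dw3.
  pose proof Ok_w1. pose proof Ok_w2. pose proof Ok_w3. pose proof Ok_p2. pose proof Ok_p3.
  pose proof Ok_Qp2. pose proof Ok_Qp3. pose proof Ok_Qw3.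
  pose proof Ok_Jw1. pose proof Ok_Jw2. pose proof Ok_Jp2. pose proof Ok_Jp3.
  pose proof (Ok_eV _ Ok_p1). pose proof (Ok_eV _ Ok_p2). pose proof (Ok_eV _ Ok_p3).
  apply (Ok_ext 4 (fun x y =>
      - (p3 x y - Jp3 x y) * w3 x y - (- PI * (3 * x ^ 2 + 2 * x * y)) * (w3 x y - y)
    + (w1 x y - Jw1 x y) * (w1 x y + Jw1 x y) / 2 + (- PI * (x + y) ^ 2) ^ 2 / 2
    + (w2 x y - Jw2 x y) * (w2 x y + Jw2 x y) / 2
    + (2 * PI * (x + y) ^ 2 - PI * (2 * x + y) ^ 2) ^ 2 / 2
    - 3 / 2 * ((p2 x y - Jp2 x y) * (p2 x y + Jp2 x y) + (- PI * (x + y) ^ 2) ^ 2)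
    - 3 / 2 * ((p3 x y - Jp3 x y) * (p3 x y + Jp3 x y) + (- PI * (3 * x ^ 2 + 2 * x * y)) ^ 2)
    - PI / 3 * ((p2 x y - (- 2 * x - y)) * (p2 x y ^ 2 + p2 x y * (- 2 * x - y) + (- 2 * x - y) ^ 2))
    - PI / 3 * ((p3 x y - x) * (p3 x y ^ 2 + p3 x y * x + x ^ 2))
    + eV (p1 x y) + eV (p2 x y) + eV (p3 x y)
    - PI * x * (w3 x y - y) * (3 * x + w3 x y + y))).
  - intros x y. unfold Phi, Tc. rewrite !Vf_eV. unfold Jw1, Jw2, Jp2, Jp3, p1. field.
  - Osolve.
Qed.

Definition diff2 (f : R -> R -> R) (x y A B : R) : Prop :=
  forall eps, 0 < eps -> exists d, 0 < d /\ forall h k, Rabs h < d -> Rabs k < d ->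
    Rabs (f (x + h) (y + k) - f x y - A * h - B * k) <= eps * (Rabs h + Rabs k).

Lemma diff2_ext f g x y A B : (forall x y, f x y = g x y) -> diff2 f x y A B -> diff2 g x y A B.
Proof. intros E H eps He. destruct (H eps He) as [d [Hd H']]. exists d; split; auto.
  intros h k Hh Hk. rewrite <- !E. auto. Qed.

Lemma diff2_coef f x y A B A' B' : A = A' -> B = B' -> diff2 f x y A B -> diff2 f x y A' B'.
Proof. intros -> ->; auto. Qed.

Lemma abs_sum_pos h k : 0 <= Rabs h + Rabs k.
Proof. pose proof (Rabs_pos h); pose proof (Rabs_pos k); lra. Qed.

Lemma diff2_fst x y : diff2 (fun x y => x) x y 1 0.
Proof. intros eps He. exists 1; split; [lra|]. intros h k _ _.
  replace (x + h - x - 1 * h - 0 * k) with 0 by ring. rewrite Rabs_R0.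
  apply Rmult_le_pos; [lra | apply abs_sum_pos]. Qed.

Lemma diff2_snd x y : diff2 (fun x y => y) x y 0 1.
Proof. intros eps He. exists 1; split; [lra|]. intros h k _ _.
  replace (y + k - y - 0 * h - 1 * k) with 0 by ring. rewrite Rabs_R0.
  apply Rmult_le_pos; [lra | apply abs_sum_pos]. Qed.

Lemma diff2_const c x y : diff2 (fun _ _ => c) x y 0 0.
Proof. intros eps He. exists 1; split; [lra|]. intros h k _ _.
  replace (c - c - 0 * h - 0 * k) with 0 by ring. rewrite Rabs_R0.
  apply Rmult_le_pos; [lra | apply abs_sum_pos]. Qed.

Lemma diff2_add f g x y A B C D : diff2 f x y A B -> diff2 g x y C D ->
  diff2 (fun x y => f x y + g x y) x y (A + C) (B + D).
Proof.
  intros Hf Hg eps He. destruct (Hf (eps/2)) as [d1 [Hd1 H1]]; [lra|].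
  destruct (Hg (eps/2)) as [d2 [Hd2 H2]]; [lra|].
  exists (Rmin d1 d2); split. apply Rmin_pos; auto.
  intros h k Hh Hk. pose proof (Rmin_l d1 d2); pose proof (Rmin_r d1 d2).
  specialize (H1 h k ltac:(lra) ltac:(lra)). specialize (H2 h k ltac:(lra) ltac:(lra)).
  replace (f (x + h) (y + k) + g (x + h) (y + k) - (f x y + g x y) - (A + C) * h - (B + D) * k)
    with ((f (x + h) (y + k) - f x y - A * h - B * k) + (g (x + h) (y + k) - g x y - C * h - D * k)) by ring.
  eapply Rle_trans. apply Rabs_triang. lra.
Qed.

Lemma diff2_scal c f x y A B : diff2 f x y A B -> diff2 (fun x y => c * f x y) x y (c * A) (c * B).
Proof.
  intros Hf eps He. destruct (Hf (eps / (Rabs c + 1))) as [d [Hd H]].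
  { apply Rdiv_lt_0_compat; auto. pose proof (Rabs_pos c); lra. }
  exists d; split; auto. intros h k Hh Hk. specialize (H h k Hh Hk).
  replace (c * f (x + h) (y + k) - c * f x y - c * A * h - c * B * k)
    with (c * (f (x + h) (y + k) - f x y - A * h - B * k)) by ring.
  rewrite Rabs_mult. pose proof (Rabs_pos c). pose proof (abs_sum_pos h k).
  apply Rle_trans with ((Rabs c + 1) * (eps / (Rabs c + 1) * (Rabs h + Rabs k))).
  - pose proof (Rabs_pos (f (x + h) (y + k) - f x y - A * h - B * k)). nra.
  - right. field. lra.
Qed.

Lemma diff2_sub f g x y A B C D : diff2 f x y A B -> diff2 g x y C D ->
  diff2 (fun x y => f x y - g x y) x y (A - C) (B - D).
Proof.
  intros Hf Hg. apply (diff2_coef _ _ _ (A + (-1) * C) (B + (-1) * D)); try ring.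
  apply (diff2_ext (fun x y => f x y + (-1) * g x y)). intros; ring.
  apply diff2_add; auto. apply diff2_scal; auto.
Qed.

Lemma deriv_bound g u l : derivable_pt_lim g u l ->
  forall eps, 0 < eps -> exists d, 0 < d /\ forall z, Rabs z < d -> Rabs (g (u + z) - g u - l * z) <= eps * Rabs z.
Proof.
  intros H eps He. destruct (H eps He) as [d Hd]. exists d; split. apply cond_pos.
  intros z Hz. destruct (Req_dec z 0) as [->|Hz0].
  - rewrite Rplus_0_r. replace (g u - g u - l * 0) with 0 by ring. rewrite Rabs_R0. lra.
  - specialize (Hd z Hz0 Hz).
    replace (g (u + z) - g u - l * z) with (((g (u + z) - g u) / z - l) * z) by (field; auto).
    rewrite Rabs_mult. apply Rmult_le_compat_r. apply Rabs_pos. lra.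
Qed.

Lemma diff2_lip f x y A B : diff2 f x y A B -> exists d, 0 < d /\ forall h k, Rabs h < d -> Rabs k < d ->
  Rabs (f (x + h) (y + k) - f x y) <= (Rabs A + Rabs B + 1) * (Rabs h + Rabs k).
Proof.
  intros Hf. destruct (Hf 1) as [d [Hd H]]; [lra|]. exists d; split; auto.
  intros h k Hh Hk. specialize (H h k Hh Hk).
  replace (f (x + h) (y + k) - f x y) with ((f (x + h) (y + k) - f x y - A * h - B * k) + (A * h + B * k)) by ring.
  eapply Rle_trans. apply Rabs_triang.
  assert (Rabs (A * h + B * k) <= Rabs A * Rabs h + Rabs B * Rabs k).
  { eapply Rle_trans. apply Rabs_triang. rewrite !Rabs_mult. lra. }
  pose proof (Rabs_pos A); pose proof (Rabs_pos B); pose proof (Rabs_pos h); pose proof (Rabs_pos k). nra.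
Qed.

Lemma diff2_comp g g' f x y A B : derivable_pt_lim g (f x y) g' -> diff2 f x y A B ->
  diff2 (fun x y => g (f x y)) x y (g' * A) (g' * B).
Proof.
  intros Hg Hf eps He.
  set (M := Rabs A + Rabs B + 1).
  assert (HM : 0 < M) by (unfold M; pose proof (Rabs_pos A); pose proof (Rabs_pos B); lra).
  destruct (diff2_lip f x y A B Hf) as [d1 [Hd1 H1]].
  destruct (deriv_bound g (f x y) g' Hg (eps / (2 * M))) as [dg [Hdg Hg']].
  { apply Rdiv_lt_0_compat; lra. }
  destruct (Hf (eps / (2 * (Rabs g' + 1)))) as [d2 [Hd2 H2]].
  { apply Rdiv_lt_0_compat; auto. pose proof (Rabs_pos g'); lra. }
  exists (Rmin (Rmin d1 d2) (dg / (2 * M))); split.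
  { apply Rmin_pos; [apply Rmin_pos; auto|]. apply Rdiv_lt_0_compat; lra. }
  intros h k Hh Hk.
  pose proof (Rmin_l (Rmin d1 d2) (dg / (2 * M))). pose proof (Rmin_r (Rmin d1 d2) (dg / (2 * M))).
  pose proof (Rmin_l d1 d2). pose proof (Rmin_r d1 d2).
  specialize (H1 h k ltac:(lra) ltac:(lra)). specialize (H2 h k ltac:(lra) ltac:(lra)).
  fold M in H1.
  set (z := f (x + h) (y + k) - f x y).
  assert (Hz : Rabs z < dg).
  { apply Rle_lt_trans with (M * (Rabs h + Rabs k)); auto.
    assert (Hhk : Rabs h + Rabs k < dg / M).
    { replace (dg / M) with (dg / (2 * M) + dg / (2 * M)) by (field; lra). lra. }
    apply Rmult_lt_compat_l with (r := M) in Hhk; auto.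
    replace (M * (dg / M)) with dg in Hhk by (field; lra). lra. }
  specialize (Hg' z Hz). replace (f x y + z) with (f (x + h) (y + k)) in Hg' by (unfold z; ring).
  replace (g (f (x + h) (y + k)) - g (f x y) - g' * A * h - g' * B * k)
    with ((g (f (x + h) (y + k)) - g (f x y) - g' * z) + g' * (f (x + h) (y + k) - f x y - A * h - B * k))
    by (unfold z; ring).
  eapply Rle_trans. apply Rabs_triang. rewrite Rabs_mult.
  pose proof (abs_sum_pos h k). pose proof (Rabs_pos g').
  pose proof (Rabs_pos (f (x + h) (y + k) - f x y - A * h - B * k)).
  apply Rle_trans with (eps / (2 * M) * (M * (Rabs h + Rabs k)) + (Rabs g' + 1) * (eps / (2 * (Rabs g' + 1)) * (Rabs h + Rabs k))).
  - apply Rplus_le_compat.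
    + eapply Rle_trans. apply Hg'. apply Rmult_le_compat_l; auto. apply Rlt_le, Rdiv_lt_0_compat; lra.
    + apply Rle_trans with ((Rabs g' + 1) * Rabs (f (x + h) (y + k) - f x y - A * h - B * k)). nra.
      apply Rmult_le_compat_l; lra.
  - right. field. lra.
Qed.

Lemma diff2_sq f x y A B : diff2 f x y A B ->
  diff2 (fun x y => f x y ^ 2) x y (2 * f x y * A) (2 * f x y * B).
Proof.
  intros H. eapply diff2_coef; [ | | apply (diff2_comp (fun t => t ^ 2) (2 * f x y) f x y A B); auto]; try ring.
  replace (2 * f x y) with (INR 2 * f x y ^ Init.Nat.pred 2) by (simpl; ring).
  apply derivable_pt_lim_pow.
Qed.

Lemma diff2_mul f g x y A B C D : diff2 f x y A B -> diff2 g x y C D ->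
  diff2 (fun x y => f x y * g x y) x y (f x y * C + g x y * A) (f x y * D + g x y * B).
Proof.
  intros Hf Hg.
  apply (diff2_ext (fun x y => / 4 * ((f x y + g x y) ^ 2 - (f x y - g x y) ^ 2))). intros; field.
  eapply diff2_coef; [ | | apply diff2_scal; apply diff2_sub; apply diff2_sq;
    [apply diff2_add; eauto | apply diff2_sub; eauto]]; cbv beta; field.
Qed.

Lemma diff2_py f x y A B : diff2 f x y A B -> derivable_pt_lim (fun t => f x t) y B.
Proof.
  intros H eps He. destruct (H (eps / 2)) as [d [Hd H']]; [lra|].
  exists (mkposreal d Hd). intros h Hh0 Hh. simpl in Hh.
  specialize (H' 0 h ltac:(rewrite Rabs_R0; lra) Hh). rewrite Rplus_0_r, Rabs_R0 in H'.
  replace ((f x (y + h) - f x y) / h - B) with ((f x (y + h) - f x y - A * 0 - B * h) / h) by (field; auto).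
  unfold Rdiv. rewrite Rabs_mult, Rabs_inv. pose proof (Rabs_pos_lt h Hh0).
  apply Rle_lt_trans with (eps / 2 * (0 + Rabs h) * / Rabs h).
  apply Rmult_le_compat_r. left; apply Rinv_0_lt_compat; auto. auto.
  replace (eps / 2 * (0 + Rabs h) * / Rabs h) with (eps / 2) by (field; lra). lra.
Qed.

Lemma diff2_px f x y A B : diff2 f x y A B -> derivable_pt_lim (fun t => f t y) x A.
Proof.
  intros H eps He. destruct (H (eps / 2)) as [d [Hd H']]; [lra|].
  exists (mkposreal d Hd). intros h Hh0 Hh. simpl in Hh.
  specialize (H' h 0 Hh ltac:(rewrite Rabs_R0; lra)). rewrite Rplus_0_r, Rabs_R0 in H'.
  replace ((f (x + h) y - f x y) / h - A) with ((f (x + h) y - f x y - A * h - B * 0) / h) by (field; auto).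
  unfold Rdiv. rewrite Rabs_mult, Rabs_inv. pose proof (Rabs_pos_lt h Hh0).
  apply Rle_lt_trans with (eps / 2 * (Rabs h + 0) * / Rabs h).
  apply Rmult_le_compat_r. left; apply Rinv_0_lt_compat; auto. auto.
  replace (eps / 2 * (Rabs h + 0) * / Rabs h) with (eps / 2) by (field; lra). lra.
Qed.

Lemma diff2_cos P x y A B : diff2 P x y A B -> diff2 (fun x y => cos (P x y)) x y (- sin (P x y) * A) (- sin (P x y) * B).
Proof. intros H. apply diff2_comp; auto. apply derivable_pt_lim_cos. Qed.
Lemma diff2_sin P x y A B : diff2 P x y A B -> diff2 (fun x y => sin (P x y)) x y (cos (P x y) * A) (cos (P x y) * B).
Proof. intros H. apply diff2_comp; auto. apply derivable_pt_lim_sin. Qed.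

Lemma diff2_v P x y A B : diff2 P x y A B ->
  diff2 (fun x y => v (P x y)) x y (dv (P x y) * A) (dv (P x y) * B).
Proof.
  intros H. unfold v.
  eapply diff2_coef; [ | | apply diff2_sub; apply diff2_scal;
     [apply diff2_sub; [apply diff2_cos; eauto | apply diff2_const] | apply diff2_sin; eauto]];
   unfold dv; ring.
Qed.

Lemma diff2_Vf P x y A B : diff2 P x y A B ->
  diff2 (fun x y => Vf (P x y)) x y (v (P x y) * A) (v (P x y) * B).
Proof.
  intros H. unfold Vf.
  eapply diff2_coef; [ | | apply diff2_add; apply diff2_scal;
     [apply diff2_sub; [apply diff2_sin; eauto | eauto] | apply diff2_sub; [apply diff2_cos; eauto | apply diff2_const]]];
   unfold v; ring.
Qed.

Definition Tp1 (x y a b : R) := a + b.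
Definition Tw1 (x y a b : R) := b + dv (p1 x y) * Tp1 x y a b.
Definition Tp2 (x y a b : R) := Tp1 x y a b + Tw1 x y a b.
Definition Tw2 (x y a b : R) := Tw1 x y a b + dv (p2 x y) * Tp2 x y a b.
Definition Tp3 (x y a b : R) := Tp2 x y a b + Tw2 x y a b.
Definition Tw3 (x y a b : R) := Tw2 x y a b + dv (p3 x y) * Tp3 x y a b.

Lemma diff2_p1 x y : diff2 p1 x y (Tp1 x y 1 0) (Tp1 x y 0 1).
Proof. unfold p1, Tp1. apply diff2_add; [apply diff2_fst | apply diff2_snd]. Qed.

Lemma diff2_w1 x y : diff2 w1 x y (Tw1 x y 1 0) (Tw1 x y 0 1).
Proof. unfold w1, Tw1. apply diff2_add; [apply diff2_snd | apply diff2_v, diff2_p1]. Qed.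

Lemma diff2_p2 x y : diff2 p2 x y (Tp2 x y 1 0) (Tp2 x y 0 1).
Proof. unfold p2, Tp2. apply diff2_add; [apply diff2_p1 | apply diff2_w1]. Qed.

Lemma diff2_w2 x y : diff2 w2 x y (Tw2 x y 1 0) (Tw2 x y 0 1).
Proof. unfold w2, Tw2. apply diff2_add; [apply diff2_w1 | apply diff2_v, diff2_p2]. Qed.

Lemma diff2_p3 x y : diff2 p3 x y (Tp3 x y 1 0) (Tp3 x y 0 1).
Proof. unfold p3, Tp3. apply diff2_add; [apply diff2_p2 | apply diff2_w2]. Qed.

Lemma diff2_w3 x y : diff2 w3 x y (Tw3 x y 1 0) (Tw3 x y 0 1).
Proof. unfold w3, Tw3. apply diff2_add; [apply diff2_w2 | apply diff2_v, diff2_p3]. Qed.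

Lemma diff2_Phi x y : diff2 Phi x y ((w3 x y - y) + (x - p3 x y) * Tw3 x y 1 0) ((x - p3 x y) * Tw3 x y 0 1).
Proof.
  apply (diff2_ext (fun x y => (x - p3 x y) * w3 x y + (/ 2 * y ^ 2 + Vf (p1 x y))
       + (/ 2 * w1 x y ^ 2 + Vf (p2 x y)) + (/ 2 * w2 x y ^ 2 + Vf (p3 x y)))).
  { intros; unfold Phi; field. }
  eapply diff2_coef; [ | |
    apply diff2_add; [apply diff2_add; [apply diff2_add; [
        apply diff2_mul; [apply diff2_sub; [apply diff2_fst | apply diff2_p3] | apply diff2_w3]
      | apply diff2_add; [apply diff2_scal, diff2_sq, diff2_snd | apply diff2_Vf, diff2_p1]]
      | apply diff2_add; [apply diff2_scal, diff2_sq, diff2_w1 | apply diff2_Vf, diff2_p2]]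
      | apply diff2_add; [apply diff2_scal, diff2_sq, diff2_w2 | apply diff2_Vf, diff2_p3]] ];
  cbv beta; unfold Tp3, Tp2, Tp1; unfold w3; unfold w2; unfold w1; field.
Qed.

Lemma Ok_Ba : Ok 1 (fun x y => Tw3 x y 0 1 - 1).
Proof.
  pose proof (Ok_eu _ Ok_p1). pose proof (Ok_eu _ Ok_p2). pose proof (Ok_eu _ Ok_p3).
  apply (Ok_ext 1 (fun x y => eu (p1 x y) + 2 * eu (p2 x y) - 2 * (eu (p1 x y) * eu (p2 x y))
     - eu (p1 x y) * eu (p3 x y) - eu (p2 x y) * eu (p3 x y) + eu (p1 x y) * eu (p2 x y) * eu (p3 x y))).
  - intros x y. unfold Tw3, Tp3, Tw2, Tp2, Tw1, Tp1. rewrite !dv_eu. ring.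
  - Osolve.
Qed.

Definition r0prop (r0 : R) : Prop :=
  0 < r0 /\ r0 <= 1/4 /\
  (forall x y, Rabs x < r0 -> Rabs y < r0 -> 1/2 <= Tw3 x y 0 1) /\
  (forall x y, Rabs x < r0 -> Rabs y < r0 -> Rabs (w3 x y - y) <= / 4 * sN x y).

Lemma r0_exists : exists r0, r0prop r0.
Proof.
  destruct Ok_Ba as [C1 [HC1 B1]]. destruct Ok_Qw3 as [C2 [HC2 B2]].
  set (r0 := Rmin (1/4) (Rmin (/ (4 * (C1 + 1))) (/ (8 * (C2 + 1))))).
  assert (Hr1 : r0 <= 1/4) by apply Rmin_l.
  assert (Hr2 : r0 <= / (4 * (C1 + 1))) by (eapply Rle_trans; [apply Rmin_r | apply Rmin_l]).
  assert (Hr3 : r0 <= / (8 * (C2 + 1))) by (eapply Rle_trans; [apply Rmin_r | apply Rmin_r]).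
  assert (Hr0 : 0 < r0).
  { unfold r0. repeat apply Rmin_pos; try lra; apply Rinv_0_lt_compat; lra. }
  exists r0. split; [auto|split; [auto|split]].
  - intros x y Hx Hy. assert (Hs : sN x y <= 1) by (unfold sN; lra).
    specialize (B1 x y Hs). simpl in B1. rewrite Rmult_1_r in B1.
    apply Rabs_le_inv in B1.
    assert (C1 * sN x y <= 1/2).
    { assert (sN x y <= 2 * r0) by (unfold sN; lra).
      apply Rle_trans with (C1 * (2 * r0)). apply Rmult_le_compat_l; auto.
      apply Rle_trans with (C1 * (2 * / (4 * (C1 + 1)))). apply Rmult_le_compat_l; lra.
      apply Rle_trans with ((C1 + 1) * (2 * / (4 * (C1 + 1)))). 
      apply Rmult_le_compat_r. assert (0 < / (4 * (C1 + 1))) by (apply Rinv_0_lt_compat; lra). lra. lra.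
      right. field. lra. }
    lra.
  - intros x y Hx Hy. assert (Hs : sN x y <= 1) by (unfold sN; lra).
    specialize (B2 x y Hs).
    assert (H0 : 0 <= sN x y) by apply sN_ge0.
    assert (C2 * sN x y <= / 4).
    { assert (sN x y <= 2 * r0) by (unfold sN; lra).
      apply Rle_trans with (C2 * (2 * r0)). apply Rmult_le_compat_l; auto.
      apply Rle_trans with (C2 * (2 * / (8 * (C2 + 1)))). apply Rmult_le_compat_l; lra.
      apply Rle_trans with ((C2 + 1) * (2 * / (8 * (C2 + 1)))).
      apply Rmult_le_compat_r. assert (0 < / (8 * (C2 + 1))) by (apply Rinv_0_lt_compat; lra). lra. lra.
      right. field. lra. }
    eapply Rle_trans. apply B2. simpl. rewrite Rmult_1_r.
    replace (C2 * (sN x y * sN x y)) with ((C2 * sN x y) * sN x y) by ring.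
    apply Rmult_le_compat_r; auto.
Qed.

Lemma cont_w3 x c : continuity (fun t => w3 x t - c).
Proof.
  intros t. apply derivable_continuous_pt.
  exists (Tw3 x t 0 1 - 0).
  pose proof (diff2_sub w3 (fun _ _ => c) x t _ _ _ _ (diff2_w3 x t) (diff2_const c x t)) as H.
  apply diff2_py in H. exact H.
Qed.

Lemma cont_w3_x y c : continuity (fun t => w3 t y - c).
Proof.
  intros t. apply derivable_continuous_pt.
  exists (Tw3 t y 1 0 - 0).
  pose proof (diff2_sub w3 (fun _ _ => c) t y _ _ _ _ (diff2_w3 t y) (diff2_const c t y)) as H.
  apply diff2_px in H. exact H.
Qed.

Lemma mono r0 x u1 u2 : r0prop r0 -> Rabs x < r0 -> - r0 < u1 -> u1 < u2 -> u2 < r0 ->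
  (u2 - u1) / 2 <= w3 x u2 - w3 x u1.
Proof.
  intros [_ [_ [HB _]]] Hx H1 H12 H2.
  destruct (MVT_cor2 (fun t => w3 x t) (fun t => Tw3 x t 0 1) u1 u2 H12) as [c [Hc Hc']].
  { intros c _. apply (diff2_py w3 x c (Tw3 x c 1 0)). apply diff2_w3. }
  rewrite Hc. assert (1/2 <= Tw3 x c 0 1) by (apply HB; auto; apply Rabs_def1; lra).
  nra.
Qed.

Lemma inj r0 x u u' : r0prop r0 -> Rabs x < r0 -> Rabs u < r0 -> Rabs u' < r0 ->
  w3 x u = w3 x u' -> u = u'.
Proof.
  intros Hr Hx Hu Hu' E. apply Rabs_def2 in Hu. apply Rabs_def2 in Hu'.
  destruct (Rtotal_order u u') as [Hlt|[Heq|Hgt]]; auto.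
  - pose proof (mono r0 x u u' Hr Hx ltac:(lra) Hlt ltac:(lra)). lra.
  - pose proof (mono r0 x u' u Hr Hx ltac:(lra) Hgt ltac:(lra)). lra.
Qed.

Definition winv (r0 x W : R) : R := epsilon (inhabits 0) (fun w => Rabs w < r0 /\ w3 x w = W).

Lemma winv_spec r0 x u : r0prop r0 -> Rabs x < r0 -> Rabs u < r0 -> winv r0 x (w3 x u) = u.
Proof.
  intros Hr Hx Hu. unfold winv.
  destruct (epsilon_spec (inhabits 0) (fun w => Rabs w < r0 /\ w3 x w = w3 x u)) as [H1 H2].
  { exists u; auto. }
  apply (inj r0 x); auto.
Qed.

Lemma winv_solve r0 x a b W : r0prop r0 -> Rabs x < r0 -> - r0 < a -> a < b -> b < r0 ->
  w3 x a < W -> W < w3 x b -> a <= winv r0 x W <= b /\ w3 x (winv r0 x W) = W.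
Proof.
  intros Hr Hx Ha Hab Hb HWa HWb.
  destruct (IVT (fun t => w3 x t - W) a b (cont_w3 x W) Hab ltac:(lra) ltac:(lra)) as [u [Hu Hu']].
  assert (Rabs u < r0) by (apply Rabs_def1; lra).
  replace W with (w3 x u) by lra. rewrite winv_spec; auto.
Qed.

Definition Gf (r0 W x : R) : R := Phi x (winv r0 x W).

Lemma Rabs_sub_le a b : Rabs (a - b) <= Rabs a + Rabs b.
Proof. unfold Rminus. eapply Rle_trans. apply Rabs_triang. rewrite Rabs_Ropp. lra. Qed.

Lemma winv_cont r0 x0 w0 : r0prop r0 -> Rabs x0 < r0 / 2 -> Rabs w0 < r0 / 2 ->
  forall e1, 0 < e1 -> e1 <= r0 / 4 -> exists d, 0 < d /\ forall h m, Rabs h < d -> Rabs m < d ->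
  Rabs (winv r0 (x0 + h) (w3 x0 w0 + m) - w0) < e1 /\ w3 (x0 + h) (winv r0 (x0 + h) (w3 x0 w0 + m)) = w3 x0 w0 + m.
Proof.
  intros Hr Hx0 Hw0 e1 He1 He1'.
  pose proof Hr as [Hr0 _].
  set (e := e1 / 2). assert (He : 0 < e) by (unfold e; lra).
  apply Rabs_def2 in Hx0 as Hx0'. apply Rabs_def2 in Hw0 as Hw0'.
  assert (Hx0r : Rabs x0 < r0) by lra.
  pose proof (mono r0 x0 w0 (w0 + e) Hr Hx0r ltac:(unfold e; lra) ltac:(lra) ltac:(unfold e; lra)) as Mp.
  pose proof (mono r0 x0 (w0 - e) w0 Hr Hx0r ltac:(unfold e; lra) ltac:(lra) ltac:(unfold e; lra)) as Mm.
  destruct (diff2_lip w3 x0 (w0 + e) _ _ (diff2_w3 x0 (w0 + e))) as [dp [Hdp Lp]].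
  destruct (diff2_lip w3 x0 (w0 - e) _ _ (diff2_w3 x0 (w0 - e))) as [dm [Hdm Lm]].
  set (Mp' := Rabs (Tw3 x0 (w0 + e) 1 0) + Rabs (Tw3 x0 (w0 + e) 0 1) + 1) in Lp.
  set (Mm' := Rabs (Tw3 x0 (w0 - e) 1 0) + Rabs (Tw3 x0 (w0 - e) 0 1) + 1) in Lm.
  assert (HMp : 1 <= Mp') by (unfold Mp'; pose proof (Rabs_pos (Tw3 x0 (w0 + e) 1 0)); pose proof (Rabs_pos (Tw3 x0 (w0 + e) 0 1)); lra).
  assert (HMm : 1 <= Mm') by (unfold Mm'; pose proof (Rabs_pos (Tw3 x0 (w0 - e) 1 0)); pose proof (Rabs_pos (Tw3 x0 (w0 - e) 0 1)); lra).
  set (d := Rmin (Rmin dp dm) (Rmin (Rmin (e / (4 * Mp')) (e / (4 * Mm'))) (Rmin (e / 4) (r0 / 4)))).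
  assert (Hd1 : d <= dp) by (unfold d; eapply Rle_trans; [apply Rmin_l | apply Rmin_l]).
  assert (Hd2 : d <= dm) by (unfold d; eapply Rle_trans; [apply Rmin_l | apply Rmin_r]).
  assert (Hd3 : d <= e / (4 * Mp')) by (unfold d; eapply Rle_trans; [apply Rmin_r | eapply Rle_trans; [apply Rmin_l | apply Rmin_l]]).
  assert (Hd4 : d <= e / (4 * Mm')) by (unfold d; eapply Rle_trans; [apply Rmin_r | eapply Rle_trans; [apply Rmin_l | apply Rmin_r]]).
  assert (Hd5 : d <= e / 4) by (unfold d; eapply Rle_trans; [apply Rmin_r | eapply Rle_trans; [apply Rmin_r | apply Rmin_l]]).
  assert (Hd6 : d <= r0 / 4) by (unfold d; eapply Rle_trans; [apply Rmin_r | eapply Rle_trans; [apply Rmin_r | apply Rmin_r]]).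
  assert (Hd : 0 < d).
  { unfold d. repeat apply Rmin_pos; auto; apply Rdiv_lt_0_compat; lra. }
  exists d; split; auto. intros h m Hh Hm.
  specialize (Lp h 0 ltac:(lra) ltac:(rewrite Rabs_R0; lra)).
  specialize (Lm h 0 ltac:(lra) ltac:(rewrite Rabs_R0; lra)).
  rewrite Rplus_0_r, Rabs_R0, Rplus_0_r in Lp, Lm.
  assert (Mp'h : Mp' * Rabs h <= e / 4).
  { apply Rle_trans with (Mp' * (e / (4 * Mp'))). apply Rmult_le_compat_l; lra. right; field; lra. }
  assert (Mm'h : Mm' * Rabs h <= e / 4).
  { apply Rle_trans with (Mm' * (e / (4 * Mm'))). apply Rmult_le_compat_l; lra. right; field; lra. }
  apply Rabs_le_inv in Lp. apply Rabs_le_inv in Lm.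
  apply Rabs_def2 in Hh as Hh'. apply Rabs_def2 in Hm as Hm'.
  assert (Hxh : Rabs (x0 + h) < r0) by (apply Rabs_def1; lra).
  assert (HS1 : w3 (x0 + h) (w0 - e) < w3 x0 w0 + m) by (unfold e in *; lra).
  assert (HS2 : w3 x0 w0 + m < w3 (x0 + h) (w0 + e)) by (unfold e in *; lra).
  destruct (winv_solve r0 (x0 + h) (w0 - e) (w0 + e) (w3 x0 w0 + m) Hr Hxh
     ltac:(unfold e; lra) ltac:(unfold e; lra) ltac:(unfold e; lra) HS1 HS2) as [[A1 A2] A3].
  split; auto. apply Rabs_def1; unfold e in *; lra.
Qed.

Lemma G_diff r0 x0 w0 : r0prop r0 -> Rabs x0 < r0 / 2 -> Rabs w0 < r0 / 2 ->
  diff2 (fun x W => Gf r0 W x) x0 (w3 x0 w0) (w3 x0 w0 - w0) (x0 - p3 x0 w0).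
Proof.
  intros Hr Hx0 Hw0 eps He. pose proof Hr as [Hr0 [_ [HB _]]].
  set (Aa := Tw3 x0 w0 1 0). set (Ba := Tw3 x0 w0 0 1).
  assert (HBa : 1/2 <= Ba) by (apply HB; lra).
  set (K := Rabs (x0 - p3 x0 w0)). assert (HK : 0 <= K) by apply Rabs_pos.
  assert (HAa : 0 <= Rabs Aa) by apply Rabs_pos.
  set (eta := Rmin (1/4) (eps / ((1 + K) * (4 * Rabs Aa + 5)))).
  assert (Heta : 0 < eta).
  { unfold eta. apply Rmin_pos. lra. apply Rdiv_lt_0_compat; auto. apply Rmult_lt_0_compat; lra. }
  assert (Heta1 : eta <= 1/4) by apply Rmin_l.
  assert (Heta2 : eta * ((1 + K) * (4 * Rabs Aa + 5)) <= eps).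
  { apply Rle_trans with (eps / ((1 + K) * (4 * Rabs Aa + 5)) * ((1 + K) * (4 * Rabs Aa + 5))).
    apply Rmult_le_compat_r. apply Rmult_le_pos; lra. apply Rmin_r. right; field; lra. }
  destruct (diff2_w3 x0 w0 eta Heta) as [da [Hda Ha]].
  destruct (diff2_Phi x0 w0 eta Heta) as [dp [Hdp Hp]].
  set (e1 := Rmin (Rmin da dp) (r0 / 4)).
  assert (He1 : 0 < e1) by (unfold e1; repeat apply Rmin_pos; lra).
  assert (He1' : e1 <= r0 / 4) by apply Rmin_r.
  assert (He1a : e1 <= da) by (unfold e1; eapply Rle_trans; [apply Rmin_l | apply Rmin_l]).
  assert (He1p : e1 <= dp) by (unfold e1; eapply Rle_trans; [apply Rmin_l | apply Rmin_r]).
  destruct (winv_cont r0 x0 w0 Hr Hx0 Hw0 e1 He1 He1') as [d1 [Hd1 Hc]].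
  set (d := Rmin d1 e1).
  assert (Hd : 0 < d) by (unfold d; apply Rmin_pos; auto).
  exists d; split; auto. intros h m Hh Hm.
  assert (Hh1 : Rabs h < d1) by (eapply Rlt_le_trans; [apply Hh | apply Rmin_l]).
  assert (Hm1 : Rabs m < d1) by (eapply Rlt_le_trans; [apply Hm | apply Rmin_l]).
  assert (Hhe : Rabs h < e1) by (eapply Rlt_le_trans; [apply Hh | apply Rmin_r]).
  destruct (Hc h m Hh1 Hm1) as [Hk Hw].
  set (k := winv r0 (x0 + h) (w3 x0 w0 + m) - w0) in Hk.
  assert (Ek : winv r0 (x0 + h) (w3 x0 w0 + m) = w0 + k) by (unfold k; ring).
  rewrite Ek in Hw.
  specialize (Ha h k ltac:(lra) ltac:(lra)). specialize (Hp h k ltac:(lra) ltac:(lra)).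
  rewrite Hw in Ha.
  unfold Gf. rewrite Ek.
  assert (Hx0r : Rabs x0 < r0) by lra. assert (Hw0r : Rabs w0 < r0) by lra.
  rewrite (winv_spec r0 x0 w0 Hr Hx0r Hw0r).
  fold Aa Ba in Ha. fold Ba in Hp.
  replace (w3 x0 w0 + m - w3 x0 w0 - Aa * h - Ba * k) with (m - Aa * h - Ba * k) in Ha by ring.
  set (dPhi := Phi (x0 + h) (w0 + k) - Phi x0 w0) in *.
  replace (dPhi - (w3 x0 w0 - w0) * h - (x0 - p3 x0 w0) * m)
    with ((dPhi - (w3 x0 w0 - w0 + (x0 - p3 x0 w0) * Aa) * h - (x0 - p3 x0 w0) * Ba * k)
          - (x0 - p3 x0 w0) * (m - Aa * h - Ba * k)) by (unfold dPhi; ring).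
  assert (Hp' : Rabs (dPhi - (w3 x0 w0 - w0 + (x0 - p3 x0 w0) * Aa) * h - (x0 - p3 x0 w0) * Ba * k) <= eta * (Rabs h + Rabs k)).
  { unfold dPhi. replace (Phi (x0 + h) (w0 + k) - Phi x0 w0 - (w3 x0 w0 - w0 + (x0 - p3 x0 w0) * Aa) * h - (x0 - p3 x0 w0) * Ba * k)
      with (Phi (x0 + h) (w0 + k) - Phi x0 w0 - (w3 x0 w0 - w0 + (x0 - p3 x0 w0) * Aa) * h - (x0 - p3 x0 w0) * Ba * k) by ring.
    exact Hp. }
  assert (Hkb : Rabs k <= 4 * Rabs m + (4 * Rabs Aa + 1) * Rabs h).
  { assert (Rabs (Ba * k) <= Rabs m + Rabs Aa * Rabs h + eta * (Rabs h + Rabs k)).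
    { replace (Ba * k) with (m - Aa * h - (m - Aa * h - Ba * k)) by ring.
      eapply Rle_trans. apply Rabs_triang. rewrite Rabs_Ropp.
      eapply Rle_trans. apply Rplus_le_compat_r. unfold Rminus. apply Rabs_triang.
      rewrite Rabs_Ropp, Rabs_mult. lra. }
    rewrite Rabs_mult, (Rabs_right Ba) in H by lra.
    pose proof (Rabs_pos h). pose proof (Rabs_pos k). pose proof (Rabs_pos m).
    assert (eta * (Rabs h + Rabs k) <= 1/4 * (Rabs h + Rabs k)) by (apply Rmult_le_compat_r; lra).
    assert (1/2 * Rabs k <= Ba * Rabs k) by (apply Rmult_le_compat_r; lra).
    lra. }
  eapply Rle_trans. apply Rabs_sub_le. rewrite Rabs_mult. fold K.
  pose proof (Rabs_pos h). pose proof (Rabs_pos k). pose proof (Rabs_pos m).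
  apply Rle_trans with (eta * (Rabs h + Rabs k) + K * (eta * (Rabs h + Rabs k))).
  { apply Rplus_le_compat; auto. apply Rmult_le_compat_l; auto. }
  assert (Rabs h + Rabs k <= (4 * Rabs Aa + 5) * (Rabs h + Rabs m)) by nra.
  apply Rle_trans with (eta * ((1 + K) * (4 * Rabs Aa + 5)) * (Rabs h + Rabs m)).
  { replace (eta * (Rabs h + Rabs k) + K * (eta * (Rabs h + Rabs k))) with ((eta * (1 + K)) * (Rabs h + Rabs k)) by ring.
    replace (eta * ((1 + K) * (4 * Rabs Aa + 5)) * (Rabs h + Rabs m)) with ((eta * (1 + K)) * ((4 * Rabs Aa + 5) * (Rabs h + Rabs m))) by ring.
    apply Rmult_le_compat_l; auto. apply Rmult_le_pos; lra. }
  apply Rmult_le_compat_r; lra.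
Qed.

Lemma G_local r0 : r0prop r0 -> forall x W, Rabs x < r0 / 8 -> Rabs W < r0 / 8 ->
  Rabs (winv r0 x W) < r0 /\ w3 x (winv r0 x W) = W /\ sN x (winv r0 x W) <= 2 * (Rabs x + Rabs W).
Proof.
  intros Hr x W Hx HW. pose proof Hr as [Hr0 [Hr1 [_ HQ]]].
  apply Rabs_def2 in Hx as Hx'. apply Rabs_def2 in HW as HW'.
  assert (Hxr : Rabs x < r0) by lra.
  pose proof (HQ x (r0 / 2) Hxr ltac:(rewrite Rabs_right; lra)) as Qb.
  pose proof (HQ x (- (r0 / 2)) Hxr ltac:(rewrite Rabs_Ropp, Rabs_right; lra)) as Qa.
  unfold sN in Qa, Qb. rewrite Rabs_Ropp in Qa. rewrite (Rabs_right (r0/2)) in Qa, Qb by lra.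
  apply Rabs_le_inv in Qa. apply Rabs_le_inv in Qb.
  pose proof (Rabs_pos x).
  destruct (winv_solve r0 x (- (r0 / 2)) (r0 / 2) W Hr Hxr ltac:(lra) ltac:(lra) ltac:(lra)
    ltac:(lra) ltac:(lra)) as [[A1 A2] A3].
  set (w := winv r0 x W) in *.
  assert (Hw : Rabs w < r0) by (apply Rabs_def1; lra).
  split; auto. split; auto.
  pose proof (HQ x w Hxr Hw) as Qw. rewrite A3 in Qw. unfold sN in *.
  assert (Rabs w <= Rabs W + Rabs (W - w)).
  { replace w with (W - (W - w)) at 1 by ring. apply Rabs_sub_le. }
  pose proof (Rabs_pos W). lra.
Qed.

Lemma G_O4 r0 : r0prop r0 -> exists C, 0 <= C /\ forall x W, Rabs x < r0 / 8 -> Rabs W < r0 / 8 ->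
  Rabs (Gf r0 W x - Tc x W) <= C * (Rabs x + Rabs W) ^ 4.
Proof.
  intros Hr. pose proof Hr as [Hr0 [Hr1 _]]. destruct Ok_Phi as [C [HC B]].
  exists (16 * C). split. lra. intros x W Hx HW.
  destruct (G_local r0 Hr x W Hx HW) as [Hw [E Hs]].
  unfold Gf. set (w := winv r0 x W) in *. replace (Tc x W) with (Tc x (w3 x w)) by (rewrite E; auto).
  assert (H1 : sN x w <= 1) by lra.
  eapply Rle_trans. apply (B x w H1).
  pose proof (sN_ge0 x w).
  replace (16 * C * (Rabs x + Rabs W) ^ 4) with (C * (2 * (Rabs x + Rabs W)) ^ 4) by ring.
  apply Rmult_le_compat_l; auto. apply pow_incr; auto.
Qed.

Lemma Ok_Tc : Ok 3 (fun x y => Tc y x).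
Proof. unfold Tc. Osolve. Qed.

Lemma f3_eq a b : f3 (a, b) = (a + b, b + v (a + b)).
Proof. unfold f3, v. simpl. f_equal. ring. Qed.

Lemma F3_eq x y : f3 (f3 (f3 (x, y))) = (p3 x y, w3 x y).
Proof. rewrite !f3_eq. reflexivity. Qed.

Lemma step_cone C rho psi w :
  0 <= C -> 0 < rho -> rho <= 1/10 -> 10 * C * rho <= 1 ->
  (forall x y, sN x y <= 1 -> Rabs (p3 x y - Jp3 x y) <= C * sN x y ^ 3) ->
  (forall x y, sN x y <= 1 -> Rabs (w3 x y - Jw3 x y) <= C * sN x y ^ 3) ->
  0 < w -> w <= rho -> Rabs psi <= w / 10 ->
  0 < w3 psi w /\ Rabs (p3 psi w) <= w3 psi w / 10 /\ w + 2/5 * w ^ 2 <= w3 psi w.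
Proof.
  intros HC Hr Hr1 Hr2 B1 B2 Hw Hwr Hpsi.
  pose proof PI_bnd as HPI.
  assert (Hs : sN psi w <= 11/10 * w) by (unfold sN; rewrite (Rabs_right w) by lra; lra).
  assert (Hs0 : 0 <= sN psi w) by apply sN_ge0.
  assert (Hs1 : sN psi w <= 1) by lra.
  assert (Hs3 : sN psi w ^ 3 <= 2 * w ^ 3).
  { apply Rle_trans with ((11/10 * w) ^ 3). apply pow_incr; lra. simpl; nra. }
  assert (HCw : C * w <= 1/10).
  { apply Rle_trans with (C * rho). apply Rmult_le_compat_l; auto. lra. }
  assert (HE1 : Rabs (p3 psi w - Jp3 psi w) <= 2 * C * w ^ 3).
  { eapply Rle_trans. apply B1; auto. replace (2 * C * w ^ 3) with (C * (2 * w ^ 3)) by ring.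
    apply Rmult_le_compat_l; auto. }
  assert (HE2 : Rabs (w3 psi w - Jw3 psi w) <= 2 * C * w ^ 3).
  { eapply Rle_trans. apply B2; auto. replace (2 * C * w ^ 3) with (C * (2 * w ^ 3)) by ring.
    apply Rmult_le_compat_l; auto. }
  apply Rabs_le_inv in HE1. apply Rabs_le_inv in HE2.
  unfold Jp3, Jw3 in *.
  apply Rabs_le_inv in Hpsi as Hpsi'.
  assert (HCw3 : 2 * C * w ^ 3 <= 1/5 * w ^ 2).
  { replace (2 * C * w ^ 3) with (2 * (C * w) * w ^ 2) by ring.
    assert (0 <= w ^ 2) by (apply pow_le; lra). nra. }
  assert (Hq : PI * (6 * psi ^ 2 + 6 * psi * w + w ^ 2) >= 3/5 * w ^ 2).
  { assert (6 * psi * w >= - 6/10 * w ^ 2) by (simpl; nra).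
    assert (6 * psi ^ 2 >= 0) by (simpl; nra).
    assert (6 * psi ^ 2 + 6 * psi * w + w ^ 2 >= 4/10 * w ^ 2) by lra.
    assert (0 <= w ^ 2) by (apply pow_le; lra). nra. }
  assert (Hw' : w + 2/5 * w ^ 2 <= w3 psi w) by lra.
  assert (Hw'0 : 0 < w3 psi w) by (assert (0 <= w ^ 2) by (apply pow_le; lra); lra).
  split; auto. split; auto.
  assert (Hfac0 : 0 <= 1 - 3 * PI * psi - 2 * PI * w).
  { assert (PI * psi <= 4 * (w / 10)) by nra. assert (PI * w <= 4 * w) by nra. lra. }
  assert (Hfac1 : 1 - 3 * PI * psi - 2 * PI * w <= 1 - 34/10 * w).
  { assert (- (PI * psi) <= PI * (w / 10)) by nra. assert (2 * w <= PI * w) by nra. lra. }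
  replace (p3 psi w) with (psi * (1 - 3 * PI * psi - 2 * PI * w) + (p3 psi w - (psi - PI * (3 * psi ^ 2 + 2 * psi * w)))) by ring.
  eapply Rle_trans. apply Rabs_triang. rewrite Rabs_mult, (Rabs_right (1 - 3 * PI * psi - 2 * PI * w)) by lra.
  assert (Rabs (p3 psi w - (psi - PI * (3 * psi ^ 2 + 2 * psi * w))) <= 2 * C * w ^ 3) by (apply Rabs_le; lra).
  assert (Rabs psi * (1 - 3 * PI * psi - 2 * PI * w) <= w / 10 * (1 - 34/10 * w)).
  { apply Rle_trans with (w / 10 * (1 - 3 * PI * psi - 2 * PI * w)).
    apply Rmult_le_compat_r; auto. apply Rmult_le_compat_l; lra. }
  assert (2 * C * w ^ 3 <= 2/10 * w ^ 2) by lra.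
  assert (0 <= w ^ 2) by (apply pow_le; lra).
  simpl in *. nra.
Qed.

Lemma zorbit_nat f finv N p : zorbit f finv (Z.of_nat N) p = Nat.iter N f p.
Proof.
  destruct N. reflexivity. simpl. rewrite SuccNat2Pos.id_succ. reflexivity.
Qed.

Lemma iter3 m p : Nat.iter (3 * m) f3 p = Nat.iter m (fun q => f3 (f3 (f3 q))) p.
Proof.
  induction m. reflexivity.
  replace (3 * S m)%nat with (S (S (S (3 * m)))) by lia.
  change (Nat.iter (S (S (S (3 * m)))) f3 p) with (f3 (f3 (f3 (Nat.iter (3 * m) f3 p)))).
  rewrite IHm. reflexivity.
Qed.

Lemma unstable : ~ locally_stable f3 f3inv (0, 0).
Proof.
  destruct Ok_Dp3 as [C1 [HC1 B1]]. destruct Ok_Dw3 as [C2 [HC2 B2]].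
  set (C := C1 + C2).
  assert (B1' : forall x y, sN x y <= 1 -> Rabs (p3 x y - Jp3 x y) <= C * sN x y ^ 3).
  { intros x y H. eapply Rle_trans. apply B1; auto. apply Rmult_le_compat_r.
    apply pow_le, sN_ge0. unfold C; lra. }
  assert (B2' : forall x y, sN x y <= 1 -> Rabs (w3 x y - Jw3 x y) <= C * sN x y ^ 3).
  { intros x y H. eapply Rle_trans. apply B2; auto. apply Rmult_le_compat_r.
    apply pow_le, sN_ge0. unfold C; lra. }
  assert (HC : 0 <= C) by (unfold C; lra).
  set (rho := Rmin (1/10) (/ (10 * (C + 1)))).
  assert (Hr0 : 0 < rho) by (unfold rho; apply Rmin_pos; [lra | apply Rinv_0_lt_compat; lra]).
  assert (Hr1 : rho <= 1/10) by apply Rmin_l.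
  assert (Hr2 : 10 * C * rho <= 1).
  { apply Rle_trans with (10 * (C + 1) * / (10 * (C + 1))).
    apply Rmult_le_compat; try lra. apply Rmin_r. right; field; lra. }
  intros Hst. destruct (Hst rho Hr0) as [d [Hd Hdd]].
  set (w0 := Rmin d rho / 2).
  assert (Hw0 : 0 < w0) by (unfold w0; pose proof (Rmin_pos d rho Hd Hr0); lra).
  assert (Hw0d : w0 < d) by (unfold w0; pose proof (Rmin_l d rho); lra).
  assert (Hw0r : w0 < rho) by (unfold w0; pose proof (Rmin_r d rho); lra).
  set (st := fun m => Nat.iter m (fun q => f3 (f3 (f3 q))) (0, w0)).
  assert (Claim : forall m, (forall j, (j < m)%nat -> snd (st j) <= rho) ->
     0 < snd (st m) /\ Rabs (fst (st m)) <= snd (st m) / 10 /\ w0 + 2/5 * INR m * w0 ^ 2 <= snd (st m)).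
  { induction m; intros Hj.
    - simpl. rewrite Rabs_R0. lra.
    - destruct IHm as [A1 [A2 A3]]. { intros j Hjm. apply Hj. lia. }
      assert (Hm : snd (st m) <= rho) by (apply Hj; lia).
      change (st (S m)) with (f3 (f3 (f3 (st m)))).
      destruct (st m) as [ps w] eqn:E. cbn [fst snd] in A1, A2, A3, Hm. rewrite F3_eq. cbn [fst snd].
      destruct (step_cone C rho ps w HC Hr0 Hr1 Hr2 B1' B2' A1 Hm A2) as [D1 [D2 D3]].
      split; auto. split; auto. rewrite S_INR.
      assert (w0 ^ 2 <= w ^ 2) by (apply pow_incr; split; [lra|]; pose proof (pos_INR m); nra).
      lra. }
  assert (Esc : exists m, rho < snd (st m)).
  { destruct (Classical_Prop.classic (exists m, rho < snd (st m))) as [H|H]; auto.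
    exfalso. assert (Hall : forall j, snd (st j) <= rho).
    { intros j. destruct (Rle_dec (snd (st j)) rho); auto. exfalso. apply H. exists j. lra. }
    destruct (INR_archimed (2/5 * w0 ^ 2) rho) as [n Hn].
    { assert (0 < w0 ^ 2) by (apply pow_lt; lra). lra. }
    destruct (Claim n (fun j _ => Hall j)) as [_ [_ Hc]]. specialize (Hall n). nra. }
  destruct Esc as [m Hm].
  assert (HT : T_near (fst (0, w0)) (fst (0, 0)) d).
  { exists 0%Z. simpl. replace (0 - 0 - 2 * PI * 0) with 0 by ring. rewrite Rabs_R0. lra. }
  assert (HS : Rabs (snd (0, w0) - snd (0, 0)) < d).
  { simpl. rewrite Rminus_0_r, Rabs_right; lra. }
  destruct (Hdd (0, w0) HT HS (Z.of_nat (3 * m))) as [_ H2].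
  rewrite zorbit_nat, iter3 in H2. fold (st m) in H2. simpl in H2. rewrite Rminus_0_r in H2.
  apply Rabs_def2 in H2. lra.
Qed.

Lemma Ok_bigO k f : Ok k f -> bigO k f.
Proof.
  intros [C [HC H]]. exists C, (1/2). split. lra. intros x y Hx Hy. apply H. unfold sN. lra.
Qed.

Lemma G_bigO3 r0 : r0prop r0 -> bigO 3 (Gf r0).
Proof.
  intros Hr. pose proof Hr as [Hr0 [Hr1 _]]. destruct (G_O4 r0 Hr) as [C4 [HC4 B4]].
  destruct Ok_Tc as [C3 [HC3 B3]].
  exists (C4 + C3), (r0 / 8). split. lra. intros x y Hx Hy.
  specialize (B4 y x Hy Hx).
  assert (Hs : sN x y <= 1) by (unfold sN; lra).
  specialize (B3 x y Hs). unfold sN in B3.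
  replace (Gf r0 x y) with ((Gf r0 x y - Tc y x) + Tc y x) by ring.
  eapply Rle_trans. apply Rabs_triang.
  rewrite (Rplus_comm (Rabs y) (Rabs x)) in B4.
  assert ((Rabs x + Rabs y) ^ 4 <= (Rabs x + Rabs y) ^ 3).
  { apply pow_le1_mono; [pose proof (Rabs_pos x); pose proof (Rabs_pos y); lra | unfold sN in *; lra | lia]. }
  assert (C4 * (Rabs x + Rabs y) ^ 4 <= C4 * (Rabs x + Rabs y) ^ 3) by (apply Rmult_le_compat_l; auto).
  lra.
Qed.

Lemma G_tay r0 : r0prop r0 -> exists C, 0 <= C /\ forall t, Rabs t < r0 / 8 ->
  Rabs (Gf r0 0 t - 2 * PI * t ^ 3) <= C * t ^ 4.
Proof.
  intros Hr. pose proof Hr as [Hr0 _]. destruct (G_O4 r0 Hr) as [C [HC B]]. exists C. split; auto.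
  intros t Ht. specialize (B t 0 Ht ltac:(rewrite Rabs_R0; lra)).
  unfold Tc in B.
  assert (E1 : PI * t * (t + 0) * (2 * t + 0) = 2 * PI * t ^ 3) by ring.
  assert (E2 : (Rabs t + Rabs 0) ^ 4 = t ^ 4).
  { rewrite Rabs_R0, Rplus_0_r, RPow_abs. rewrite Rabs_right. auto.
    replace (t^4) with ((t^2)^2) by ring. apply Rle_ge, pow_le, pow2_ge_0. }
  rewrite E1, E2 in B. auto.
Qed.

Lemma G_00 r0 : r0prop r0 -> Gf r0 0 0 = 0.
Proof.
  intros Hr. pose proof Hr as [Hr0 _]. destruct (G_tay r0 Hr) as [C [HC B]].
  specialize (B 0 ltac:(rewrite Rabs_R0; lra)).
  replace (2 * PI * 0 ^ 3) with 0 in B by ring. replace (C * 0 ^ 4) with 0 in B by ring.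
  rewrite Rminus_0_r in B. pose proof (Rabs_pos (Gf r0 0 0)).
  destruct (Req_dec (Gf r0 0 0) 0); auto. pose proof (Rabs_pos_lt _ H0). lra.
Qed.

Lemma G_noext r0 : r0prop r0 -> ~ strict_local_min0 (Gf r0) /\ ~ strict_local_max0 (Gf r0).
Proof.
  intros Hr. pose proof Hr as [Hr0 _]. destruct (G_tay r0 Hr) as [C [HC B]].
  pose proof (G_00 r0 Hr) as G0. pose proof PI_bnd.
  split; intros [r [Hr' Hm]].
  - set (tau := Rmin (Rmin r (r0 / 8)) (/ (C + 1)) / 2).
    assert (Ht0 : 0 < tau).
    { assert (0 < Rmin (Rmin r (r0 / 8)) (/ (C + 1))) by (repeat apply Rmin_pos; try lra; apply Rinv_0_lt_compat; lra).
      unfold tau; lra. }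
    assert (Ht1 : tau < r) by (unfold tau; pose proof (Rmin_l (Rmin r (r0 / 8)) (/ (C + 1))); pose proof (Rmin_l r (r0/8)); lra).
    assert (Ht2 : tau < r0 / 8) by (unfold tau; pose proof (Rmin_l (Rmin r (r0 / 8)) (/ (C + 1))); pose proof (Rmin_r r (r0/8)); lra).
    assert (Ht3 : C * tau <= 1/2).
    { assert (tau <= / (C + 1) / 2) by (unfold tau; pose proof (Rmin_r (Rmin r (r0 / 8)) (/ (C + 1))); lra).
      apply Rle_trans with (C * (/ (C + 1) / 2)). apply Rmult_le_compat_l; auto.
      apply Rle_trans with ((C + 1) * (/ (C + 1) / 2)). apply Rmult_le_compat_r.
      assert (0 < / (C + 1)) by (apply Rinv_0_lt_compat; lra). lra. lra. right; field; lra. }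
    specialize (Hm 0 (- tau) ltac:(rewrite Rabs_R0; lra) ltac:(rewrite Rabs_Ropp, Rabs_right; lra)).
    specialize (Hm ltac:(intros E; inversion E; lra)).
    specialize (B (- tau) ltac:(rewrite Rabs_Ropp, Rabs_right; lra)).
    apply Rabs_le_inv in B. rewrite G0 in Hm.
    assert (0 < tau ^ 3) by (apply pow_lt; lra).
    replace ((- tau) ^ 3) with (- tau ^ 3) in B by ring. replace ((- tau) ^ 4) with (tau * tau ^ 3) in B by ring.
    assert (C * (tau * tau ^ 3) <= 1/2 * tau ^ 3) by (rewrite <- Rmult_assoc; apply Rmult_le_compat_r; lra).
    nra.
  - set (tau := Rmin (Rmin r (r0 / 8)) (/ (C + 1)) / 2).
    assert (Ht0 : 0 < tau).
    { assert (0 < Rmin (Rmin r (r0 / 8)) (/ (C + 1))) by (repeat apply Rmin_pos; try lra; apply Rinv_0_lt_compat; lra).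
      unfold tau; lra. }
    assert (Ht1 : tau < r) by (unfold tau; pose proof (Rmin_l (Rmin r (r0 / 8)) (/ (C + 1))); pose proof (Rmin_l r (r0/8)); lra).
    assert (Ht2 : tau < r0 / 8) by (unfold tau; pose proof (Rmin_l (Rmin r (r0 / 8)) (/ (C + 1))); pose proof (Rmin_r r (r0/8)); lra).
    assert (Ht3 : C * tau <= 1/2).
    { assert (tau <= / (C + 1) / 2) by (unfold tau; pose proof (Rmin_r (Rmin r (r0 / 8)) (/ (C + 1))); lra).
      apply Rle_trans with (C * (/ (C + 1) / 2)). apply Rmult_le_compat_l; auto.
      apply Rle_trans with ((C + 1) * (/ (C + 1) / 2)). apply Rmult_le_compat_r.
      assert (0 < / (C + 1)) by (apply Rinv_0_lt_compat; lra). lra. lra. right; field; lra. }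
    specialize (Hm 0 tau ltac:(rewrite Rabs_R0; lra) ltac:(rewrite Rabs_right; lra)).
    specialize (Hm ltac:(intros E; inversion E; lra)).
    specialize (B tau ltac:(rewrite Rabs_right; lra)).
    apply Rabs_le_inv in B. rewrite G0 in Hm.
    assert (0 < tau ^ 3) by (apply pow_lt; lra).
    replace (tau ^ 4) with (tau * tau ^ 3) in B by ring.
    assert (C * (tau * tau ^ 3) <= 1/2 * tau ^ 3) by (rewrite <- Rmult_assoc; apply Rmult_le_compat_r; lra).
    nra.
Qed.

Theorem mainTheorem6 :
  let F := fun p : R * R => f3 (f3 (f3 p)) in
  bigO 3 (fun psi w =>
    fst (F (psi, w)) - (psi - PI * (3 * psi ^ 2 + 2 * psi * w))) /\
  bigO 3 (fun psi w =>
    snd (F (psi, w)) - (w + PI * (6 * psi ^ 2 + 6 * psi * w + w ^ 2))) /\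
  (exists G : R -> R -> R,
     (* G(w3, psi) = O_3 *)
     bigO 3 G /\
     (* generating-function relations w3 = w + d_psi G, psi3 = psi - d_w3 G *)
     (exists r, 0 < r /\ forall psi w, Rabs psi < r -> Rabs w < r ->
        derivable_pt_lim (fun y => G (snd (F (psi, w))) y) psi
          (snd (F (psi, w)) - w) /\
        derivable_pt_lim (fun x => G x psi) (snd (F (psi, w)))
          (psi - fst (F (psi, w)))) /\
     (* G = pi psi (psi + w3) (2 psi + w3) + O_4(psi, w3) *)
     bigO 4 (fun psi w3 =>
       G w3 psi - PI * psi * (psi + w3) * (2 * psi + w3)) /\
     (* no strict extremum at the origin *)
     ~ strict_local_min0 G /\ ~ strict_local_max0 G) /\
  ~ locally_stable f3 f3inv (0, 0).
Proof.
  intros F.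
  assert (EF : forall x y, F (x, y) = (p3 x y, w3 x y)) by (intros; unfold F; apply F3_eq).
  split; [|split; [|split]].
  - apply Ok_bigO. apply (Ok_ext 3 (fun x y => p3 x y - Jp3 x y)).
    intros x y. rewrite EF. reflexivity. apply Ok_Dp3.
  - apply Ok_bigO. apply (Ok_ext 3 (fun x y => w3 x y - Jw3 x y)).
    intros x y. rewrite EF. reflexivity. apply Ok_Dw3.
  - destruct r0_exists as [r0 Hr]. pose proof Hr as [Hr0 _].
    exists (Gf r0). split; [|split; [|split]].
    + apply G_bigO3; auto.
    + exists (r0 / 2). split. lra. intros psi w Hpsi Hw. rewrite !EF. cbn [fst snd].
      pose proof (G_diff r0 psi w Hr Hpsi Hw) as D. split.
      * exact (diff2_px _ _ _ _ _ D).
      * exact (diff2_py _ _ _ _ _ D).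
    + destruct (G_O4 r0 Hr) as [C [HC B]]. exists C, (r0 / 8). split. lra.
      intros x W Hx HW. apply (B x W Hx HW).
    + apply G_noext; auto.
  - apply unstable.
Qed.
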